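(* Let $x\in\mathbb{R}$ and let $f:\mathbb{R}\to\mathbb{R}$ be analytic and nonzero on the closed interval between $0$ and $x$, with $f(0)=1$, and suppose $f(y)=\exp\big(\sum_{i=1}^{\infty}c_i y^i\big)$ for all $y$ in that interval, the series converging there; put $f_k(y)=\exp(c_k y^k)$. For $r>1$ and a finite nonempty $\mathcal{S}\subset\mathbb{N}^*$ define, for $n\ge|\mathcal{S}|$, \[ x_n(\mathcal{S},r,x)=\Big[\prod_{j\in\mathcal{S}}(r^j-1)^{1/j}\Big]\frac{x}{r^n},\qquad \mathcal{P}_f(\mathcal{S},r,x)=\prod_{n=|\mathcal{S}|}^{\infty}\Big[f\big(x_n(\mathcal{S},r,x)\big)\Big]^{\binom{n-1}{|\mathcal{S}|-1}}. \] Then for every positive integer $k$, \[ f_k(x)=\lim_{r\downarrow1}\ \frac{\prod_{\mathcal{S}_k:\ |\mathcal{S}_k|\text{ odd}}\mathcal{P}_f(\mathcal{S}_k,r,x)}{\prod_{\mathcal{S}_k:\ |\mathcal{S}_k|\text{ even}}\mathcal{P}_f(\mathcal{S}_k,r,x)}, \] where $\mathcal{S}_k$ ranges over the subsets of $\mathbb{N}^*$ whose largest element is $k$.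
   Context: $\mathbb{N}^*$ is the set of positive integers and $|\mathcal{S}|$ is the cardinality of $\mathcal{S}$. The $c_i$ are the Taylor coefficients at $0$ of $\log f$ and $f_k$ is called the $k$-th component of $f$. *)

(* Defs.v *)
From HB Require Import structures.
From mathcomp Require Import all_boot all_order all_algebra.
From mathcomp Require Import all_classical all_reals all_analysis.
Set Implicit Arguments. Unset Strict Implicit. Unset Printing Implicit Defensive.
Import Order.TTheory GRing.Theory Num.Theory.
Import numFieldNormedType.Exports.
Local Open Scope classical_set_scope.
Local Open Scope ring_scope.

Section Defs.
Variable R : realType.

Definition between0 (x : R) : set R := [set y | Num.min 0 x <= y <= Num.max 0 x].

Definition analytic_at (f : R -> R) (y : R) : Prop :=
  exists2 d : R, 0 < d & exists a : nat -> R,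
    forall z, `|z - y| < d ->
      (fun N => \sum_(0 <= n < N) a n * (z - y) ^+ n) @ \oo --> f z.

Definition logf_partial (c : nat -> R) (y : R) (N : nat) : R :=
  \sum_(1 <= i < N) c i * y ^+ i.

Definition f_component (c : nat -> R) (k : nat) (y : R) : R := expR (c k * y ^+ k).

(* A subset S of N* with max S = k is encoded as  A : {set 'I_k.+1}  with
   ord_max \in A and ord0 \notin A; element j : 'I_k.+1 stands for nat j. *)
Definition max_is_k (k : nat) (A : {set 'I_k.+1}) : bool :=
  (ord_max \in A) && (ord0 \notin A).

Definition x_n (k : nat) (A : {set 'I_k.+1}) (r x : R) (n : nat) : R :=
  (\prod_(j in A) ((r ^+ j - 1) `^ ((j : nat)%:R^-1))) * x / r ^+ n.

Definition Pf_partial (f : R -> R) (k : nat) (A : {set 'I_k.+1}) (r x : R) (N : nat) : R :=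
  \prod_(#|A| <= n < N) f (x_n A r x n) ^+ 'C(n.-1, #|A|.-1).

Definition Pf (f : R -> R) (k : nat) (A : {set 'I_k.+1}) (r x : R) : R :=
  limn (Pf_partial f A r x).

Definition Pf_ratio (f : R -> R) (k : nat) (r x : R) : R :=
  (\prod_(A : {set 'I_k.+1} | max_is_k A && odd #|A|) Pf f A r x) /
  (\prod_(A : {set 'I_k.+1} | max_is_k A && ~~ odd #|A|) Pf f A r x).

End Defs.

(* Main.v *)
Require Import Defs.
From HB Require Import structures.
From mathcomp Require Import all_boot all_order all_algebra.
From mathcomp Require Import all_classical all_reals all_analysis.
From mathcomp Require Import ring lra zify.
Import Order.TTheory GRing.Theory Num.Theory.
Import numFieldNormedType.Exports.
Local Open Scope classical_set_scope.
Local Open Scope ring_scope.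

Section Helpers.
Variable R : realType.
Implicit Types (t : R).
Lemma rec_cvg (u v : R ^nat) t m N0 : 0 <= t -> t < 1 -> nondecreasing_seq u ->
  v @ \oo --> m -> (forall N, (N0 <= N)%N -> u N.+1 = t * (u N + v N)) ->
  u @ \oo --> t * m / (1 - t).
Proof.
move=> t0 t1 nd vm rec.
have t1' : 0 < 1 - t by rewrite subr_gt0.
have /cvg_seq_bounded/bounded_fun_has_ubound[M vM] : cvgn v by apply/cvg_ex; exists m.
have vle : forall n, v n <= M by move=> n; apply: vM; exists n.
have ule : forall N, (N0 <= N)%N -> u N <= t * M / (1 - t).
  move=> N hN; rewrite ler_pdivlMr //.
  have := nd _ _ (leqnSn N); rewrite rec // => h.
  have : t * v N <= t * M by rewrite ler_wpM2l.
  lra.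
have cu : cvgn u.
  apply: nondecreasing_is_cvgn => //; exists (t * M / (1 - t)) => _ [n _ <-].
  case: (leqP N0 n) => hn; first exact: ule.
  by apply: le_trans (ule N0 (leqnn _)); apply: nd; apply: ltnW.
set l := limn u.
have h1 : (fun N => u N.+1) @ \oo --> l by rewrite cvg_shiftS.
have h2 : (fun N => u N.+1) @ \oo --> t * (l + m).
  have h3 : (fun N => t * (u N + v N)) @ \oo --> t * (l + m).
    by apply: cvgMr; apply: cvgD.
  apply: cvg_trans h3; apply: near_eq_cvg.
  near=> N; rewrite /= rec //; near: N; exact: nbhs_infty_ge.
have e : l = t * (l + m) by apply: (cvg_unique _ h1 h2).
suff -> : t * m / (1 - t) = l by [].
apply: (canLR (mulfK _)); first by rewrite gt_eqF.
lra.
Unshelve. all: by end_near.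
Qed.
Definition Qs t s N := \sum_(s <= n < N) ('C(n.-1, s.-1))%:R * t ^+ n.

Lemma QsS t s N : (s <= N)%N -> Qs t s N.+1 = Qs t s N + ('C(N.-1, s.-1))%:R * t ^+ N.
Proof. by move=> h; rewrite /Qs big_nat_recr. Qed.

Lemma Qs_nd t s : 0 <= t -> nondecreasing_seq (Qs t s).
Proof.
move=> t0; apply/nondecreasing_seqP => N.
case: (leqP s N) => h; first by rewrite QsS // lerDl mulr_ge0 // exprn_ge0.
rewrite /Qs big_geq; last by apply: ltnW. by rewrite big_geq.
Qed.

Lemma Qs1_rec t N : (1 <= N)%N -> Qs t 1 N.+1 = t * (Qs t 1 N + 1).
Proof.
move=> h; rewrite -(subnK h); elim: (N - 1)%N => [|d IH].
  by rewrite /Qs /= big_nat1 big_geq //= bin0 mul1r expr1 add0r mulr1.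
rewrite addSn QsS; last by rewrite addn1.
rewrite [in RHS]QsS ?addn1 //; rewrite !addn1 in IH; rewrite IH /= !bin0 exprS; ring.
Qed.

Lemma QsSS_rec t s N : (0 < s)%N -> (s.+1 <= N)%N ->
  Qs t s.+1 N.+1 = t * (Qs t s.+1 N + Qs t s N).
Proof.
move=> s0 h; rewrite -(subnK h); elim: (N - s.+1)%N => [|d IH].
  rewrite add0n QsS // [Qs t s _]QsS // /Qs !big_geq //= !add0r.
  rewrite binn -(prednK s0) binn /= exprS; ring.
rewrite addSn QsS; last by lia.
rewrite [in RHS]QsS; last by lia. rewrite [in RHS]QsS; last by lia.
rewrite IH addnS /= -(prednK s0) binS natrD exprS /=; ring.
Qed.

Lemma Qs_cvg t s : 0 <= t -> t < 1 -> (0 < s)%N -> Qs t s @ \oo --> (t / (1 - t)) ^+ s.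
Proof.
move=> t0 t1; elim: s => // s IH _.
case: s IH => [_|s IH].
  rewrite expr1 -[X in X / _]mulr1.
  apply: (rec_cvg (Qs t 1) (fun=> 1) t (1:R) 1%N t0 t1 (Qs_nd _ _ t0) (cvg_cst _)) => N hN.
  exact: Qs1_rec.
have -> : (t / (1 - t)) ^+ s.+2 = t * (t / (1 - t)) ^+ s.+1 / (1 - t).
  by rewrite exprS mulrAC.
apply: (rec_cvg _ (Qs t s.+1) t _ s.+2 t0 t1 (Qs_nd _ _ t0) (IH isT)) => N hN.
exact: QsSS_rec.
Qed.
Lemma sum_from_series (F : R ^nat) s N :
  \sum_(s <= n < N) F n = series (fun n => if (s <= n)%N then F n else 0) N.
Proof.
by rewrite (big_nat_widenl _ _ _ _ _ (leq0n s)) /= big_mkcond; rewrite seriesEnat.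
Qed.

Lemma sum_dom_cvg (F G : R ^nat) s : (forall n, `|F n| <= G n) ->
  cvgn (fun N => \sum_(s <= n < N) G n) ->
  cvgn (fun N => \sum_(s <= n < N) F n) /\
  `|limn (fun N => \sum_(s <= n < N) F n)| <= limn (fun N => \sum_(s <= n < N) G n).
Proof.
move=> FG cG.
have eF : (fun N => \sum_(s <= n < N) F n) = series (fun n => if (s <= n)%N then F n else 0).
  by apply/funext => N; rewrite sum_from_series.
have eG : (fun N => \sum_(s <= n < N) G n) = series (fun n => if (s <= n)%N then G n else 0).
  by apply/funext => N; rewrite sum_from_series.
rewrite eF; rewrite eG in cG *.
have cN : cvgn [normed series (fun n => if (s <= n)%N then F n else 0)].
  apply: (series_le_cvg _ _ _ cG).
  - by move=> n; exact: normr_ge0.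
  - by move=> n; case: ifP => // _; apply: le_trans (FG n).
  - by move=> n /=; case: ifP => // _; rewrite normr0.
split; first exact: normed_cvg.
apply: le_trans (lim_series_norm cN) _.
apply: lim_series_le => // n /=; case: ifP => _; [exact: FG | by rewrite normr0].
Qed.
Lemma cvg_bigprod {T} (F : set_system T) {FF : Filter F} (I : Type) (s : seq I)
  (P : pred I) (g : I -> T -> R) (l : I -> R) :
  (forall i, P i -> g i @ F --> l i) ->
  (fun x => \prod_(i <- s | P i) g i x) @ F --> \prod_(i <- s | P i) l i.
Proof.
move=> H; elim: s => [|a s IH].
  rewrite big_nil; under eq_fun do rewrite big_nil; exact: cvg_cst.
rewrite big_cons; under eq_fun do rewrite big_cons.
case: ifP => Pa //; exact: cvgM (H _ Pa) IH.
Qed.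

Lemma cvg_bigsum {T} (F : set_system T) {FF : Filter F} (I : Type) (s : seq I)
  (P : pred I) (g : I -> T -> R) (l : I -> R) :
  (forall i, P i -> g i @ F --> l i) ->
  (fun x => \sum_(i <- s | P i) g i x) @ F --> \sum_(i <- s | P i) l i.
Proof.
move=> H; elim: s => [|a s IH].
  rewrite big_nil; under eq_fun do rewrite big_nil; exact: cvg_cst.
rewrite big_cons; under eq_fun do rewrite big_cons.
case: ifP => Pa //; exact: cvgD (H _ Pa) IH.
Qed.

Lemma cvg_bigsum_in {T} (F : set_system T) {FF : Filter F} (I : eqType) (s : seq I)
  (g : I -> T -> R) (l : I -> R) :
  (forall i, i \in s -> g i @ F --> l i) ->
  (fun x => \sum_(i <- s) g i x) @ F --> \sum_(i <- s) l i.
Proof.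
elim: s => [|a s IH] H.
  rewrite big_nil; under eq_fun do rewrite big_nil; exact: cvg_cst.
rewrite big_cons; under eq_fun do rewrite big_cons.
apply: cvgD; first by apply: H; rewrite mem_head.
by apply: IH => i iS; apply: H; rewrite in_cons iS orbT.
Qed.

Definition aa (j : nat) (r : R) : R := (r ^+ j - 1) `^ (j%:R^-1).
Definition hh (j i : nat) (r : R) : R := aa j r ^+ i / (r ^+ i - 1).

Lemma aa_ge0 j r : 0 <= aa j r.
Proof. exact: powR_ge0. Qed.

Lemma aaX j r : (0 < j)%N -> 1 <= r -> aa j r ^+ j = r ^+ j - 1.
Proof.
move=> j0 r1; rewrite /aa -powR_mulrn ?powR_ge0 // -powRrM mulVf ?pnatr_eq0 -?lt0n //.
by rewrite powRr1 // subr_ge0 exprn_ege1.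
Qed.

Lemma hh_eq1 i r : (0 < i)%N -> 1 < r -> hh i i r = 1.
Proof.
move=> i0 r1; rewrite /hh aaX ?ltW // divff // subr_eq0 gt_eqF //.
by rewrite exprn_egt1 // -lt0n.
Qed.

Lemma hh_bound j i r : (0 < j)%N -> (j < i)%N -> 1 < r ->
  0 <= hh j i r <= aa j r ^+ (i - j).
Proof.
move=> j0 ji r1.
have ri : 0 < r ^+ i - 1 by rewrite subr_gt0 exprn_egt1 // -lt0n (leq_trans j0 (ltnW ji)).
have rj : 0 <= r ^+ j - 1 by rewrite subr_ge0 exprn_ege1 // ltW.
have rji : r ^+ j - 1 <= r ^+ i - 1 by rewrite lerD2r ler_weXn2l ?ltW // ltnW.
have -> : hh j i r = aa j r ^+ (i - j) * ((r ^+ j - 1) / (r ^+ i - 1)).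
  by rewrite /hh -aaX ?ltW // mulrA -exprD subnK // ltnW.
apply/andP; split; first by rewrite mulr_ge0 ?exprn_ge0 ?aa_ge0 ?divr_ge0 // ltW.
rewrite ler_piMr ?exprn_ge0 ?aa_ge0 //.
by rewrite ler_pdivrMr // mul1r.
Qed.

Lemma aa_cvg0 j : (0 < j)%N -> aa j r @[r --> (1 : R)^'+] --> 0.
Proof.
move=> j0; apply/cvgr0Pnorm_le => e e0.
have c : (fun r : R => r ^+ j - 1) @ (1 : R)^'+ --> 0.
  apply: cvg_at_right_filter.
  rewrite -[X in _ --> X](subrr (1 : R)) -[X in _ --> X - _](expr1n R j).
  apply: cvgB; [exact: exprn_continuous | exact: cvg_cst].
have ej : 0 < e ^+ j by rewrite exprn_gt0.
near=> r.
have r1 : 1 < r by near: r; exact: nbhs_right_gt.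
have lt : r ^+ j - 1 < e ^+ j by near: r; exact: cvgr_lt c _ ej.
rewrite ger0_norm ?aa_ge0 // -(ler_pXn2r j0) ?nnegrE ?aa_ge0 ?ltW //.
by rewrite aaX ?ltW // ltW.
Unshelve. all: by end_near.
Qed.

Lemma aaX_cvg0 j n : (0 < j)%N -> (0 < n)%N -> aa j r ^+ n @[r --> (1 : R)^'+] --> 0.
Proof.
move=> j0 n0; have := cvg_comp _ _ (aa_cvg0 _ j0) (@exprn_continuous R n 0).
by rewrite expr0n eqn0Ngt n0 /=.
Qed.

Lemma hh_cvg0 j i : (0 < j)%N -> (j < i)%N -> hh j i r @[r --> (1 : R)^'+] --> 0.
Proof.
move=> j0 ji.
apply: (@squeeze_cvgr _ _ _ _ (fun=> 0) (fun r => aa j r ^+ (i - j))).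
- near=> r; apply: hh_bound => //; near: r; exact: nbhs_right_gt.
- exact: cvg_cst.
- by apply: aaX_cvg0 => //; rewrite subn_gt0.
Unshelve. all: by end_near.
Qed.
Lemma cvg_dist_le (u : R ^nat) l P b : u @ \oo --> l ->
  (\forall N \near \oo, `|u N - P| <= b) -> `|l - P| <= b.
Proof.
move=> ul ev.
have h : (fun N => `|u N - P|) @ \oo --> `|l - P|.
  by apply: cvg_norm; apply: cvgB => //; exact: cvg_cst.
rewrite -(cvg_lim _ h) //; apply: limr_le => //; by apply/cvg_ex; exists `|l - P|.
Qed.

Lemma geom_tail (rho : R) a N : 0 <= rho -> rho <= 2^-1 ->
  \sum_(a <= i < N) rho ^+ i <= 2 * rho ^+ a.
Proof.
move=> r0 r2.
have e : 2 * rho <= 1.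
  by rewrite mulrC -ler_pdivlMr // mul1r.
have ra : 0 <= rho ^+ a by exact: exprn_ge0.
case: (leqP a N) => aN; last first.
  rewrite big_geq; last exact: ltnW.
  by rewrite mulr_ge0.
suff : \sum_(a <= i < N) rho ^+ i <= 2 * rho ^+ a - 2 * rho ^+ N.
  move=> h; apply: le_trans h _; rewrite lerBlDr lerDl mulr_ge0 //; exact: exprn_ge0.
rewrite -(subnK aN); elim: (N - a)%N => [|d IH].
  by rewrite add0n big_geq // subrr.
rewrite addSn big_nat_recr /=; last exact: leq_addl.
have : 2 * rho ^+ (d + a).+1 <= rho ^+ (d + a).
  rewrite exprS mulrA -[X in _ <= X]mul1r; apply: ler_wpM2r e; exact: exprn_ge0.
move: IH; set A := \sum_(_ <= _ < _) _; set u := rho ^+ (d + a); set v := rho ^+ (d + a).+1.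
move=> IH h; lra.
Qed.

Variables (c : nat -> R) (x : R).

Lemma coef_bound : cvgn (logf_partial c x) ->
  exists2 M, 0 <= M & forall i, (0 < i)%N -> `|c i * x ^+ i| <= M.
Proof.
move=> /cvg_has_ub [B hB].
have pB : forall n, `|logf_partial c x n| <= B by move=> n; apply: hB; exists n.
have B0 : 0 <= B := le_trans (normr_ge0 _) (pB 0%N).
exists (2 * B); first exact: mulr_ge0.
move=> i i0.
have -> : c i * x ^+ i = logf_partial c x i.+1 - logf_partial c x i.
  by rewrite /logf_partial big_nat_recr //= addrAC subrr add0r.
apply: le_trans (ler_normB _ _) _.
have := pB i.+1; have := pB i.
set u := `|_|; set v := `|_|; move=> h1 h2; lra.
Qed.
Lemma term_bound M i y : (0 < i)%N -> 0 <= M -> `|c i * x ^+ i| <= M ->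
  `|y| <= `|x| / 2 -> `|c i * y ^+ i| <= M * (`|y| / `|x|) ^+ i.
Proof.
move=> i0 M0 cM yx.
have [x0|x0] := eqVneq x 0.
  move: yx; rewrite x0 normr0 mul0r normr_le0 => /eqP ->.
  by rewrite expr0n eqn0Ngt i0 /= mulr0 normr0 mulr_ge0 // exprn_ge0 // divr_ge0.
have -> : c i * y ^+ i = (c i * x ^+ i) * (y / x) ^+ i.
  by rewrite -mulrA -exprMn [x * _]mulrC divfK.
rewrite normrM normrX normf_div ler_wpM2r // exprn_ge0 // divr_ge0 //.
Qed.

Lemma rem_bound M : 0 <= M -> (forall i, (0 < i)%N -> `|c i * x ^+ i| <= M) ->
  forall y, cvgn (logf_partial c y) -> `|y| <= `|x| / 2 -> forall k,
  `|limn (logf_partial c y) - \sum_(1 <= i < k.+1) c i * y ^+ i|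
     <= 2 * M / `|x| ^+ k.+1 * `|y| ^+ k.+1.
Proof.
move=> M0 cM y cy yx k.
have rho0 : 0 <= `|y| / `|x| by rewrite divr_ge0.
have rho2 : `|y| / `|x| <= 2^-1.
  have [x0|x0] := eqVneq x 0; first by rewrite x0 normr0 invr0 mulr0 invr_ge0.
  by rewrite ler_pdivrMr ?normr_gt0 // mulrC.
have cy2 : logf_partial c y @ \oo --> limn (logf_partial c y) by exact: cy.
apply: (cvg_dist_le _ _ _ _ cy2).
near=> N.
have kN : (k.+1 <= N)%N by near: N; exact: nbhs_infty_ge.
rewrite /logf_partial (@big_cat_nat _ _ _ k.+1) //= addrAC subrr add0r.
apply: le_trans (ler_norm_sum _ _ _) _.
apply: le_trans (_ : \sum_(k.+1 <= i < N) M * (`|y| / `|x|) ^+ i <= _).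
  rewrite big_nat_cond [X in _ <= X]big_nat_cond; apply: ler_sum => i /andP[/andP[ki _] _].
  by apply: term_bound => //; [exact: leq_trans ki | apply: cM; exact: leq_trans ki].
rewrite -mulr_sumr; apply: le_trans (ler_wpM2l M0 (geom_tail _ _ _ rho0 rho2)) _.
rewrite expr_div_n; set a := `|y| ^+ k.+1; set b := `|x| ^+ k.+1.
have -> : M * (2 * (a / b)) = 2 * M / b * a by ring.
exact: lexx.
Unshelve. all: by end_near.
Qed.
Lemma hh_prod (k : nat) (A : {set 'I_k.+1}) i r : (0 < i)%N -> 1 < r ->
  (\prod_(j in A) aa j r) ^+ i * ((r ^+ i)^-1 / (1 - (r ^+ i)^-1)) ^+ #|A|
  = \prod_(j in A) hh j i r.
Proof.
move=> i0 r1.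
have ri1 : r ^+ i - 1 != 0 by rewrite subr_eq0 gt_eqF // exprn_egt1 // -lt0n.
have ri0 : r ^+ i != 0 by rewrite gt_eqF // exprn_gt0 // (lt_trans _ r1).
have -> : (r ^+ i)^-1 / (1 - (r ^+ i)^-1) = (r ^+ i - 1)^-1.
  by field; rewrite ri1 ri0.
by rewrite -prodrXl -prodr_const -big_split.
Qed.
End Helpers.

Arguments aa {R}.
Arguments hh {R}.
Arguments Qs {R}.

Section Main.
Variable R : realType.
Variables (f : R -> R) (c : nat -> R) (x : R) (k : nat).
Hypothesis f_ser : forall y, between0 x y ->
     cvgn (logf_partial c y) /\ f y = expR (limn (logf_partial c y)).
Variable M : R.
Hypothesis M0 : 0 <= M.
Hypothesis cM : forall i, (0 < i)%N -> `|c i * x ^+ i| <= M.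

Lemma between0_scale lam : 0 <= lam -> lam <= 1 -> between0 x (lam * x).
Proof.
move=> l0 l1; rewrite /between0 /= ge_min le_max.
case: (leP 0 x) => hx.
  by apply/andP; split; apply/orP; [left; exact: mulr_ge0 | right; exact: ler_piMl].
apply/andP; split; apply/orP.
  by right; rewrite -[X in X <= _]mul1r ler_wnM2r // ltW.
by left; rewrite mulr_ge0_le0 // ltW.
Qed.

Lemma powdiv (a r : R) n m : r != 0 -> (a / r ^+ n) ^+ m = a ^+ m * ((r ^+ m)^-1) ^+ n.
Proof. by move=> r0; rewrite exprMn; congr (_ * _); rewrite !exprVn -!exprM mulnC. Qed.
Hypothesis k0 : (0 < k)%N.

Definition Lf (y : R) := limn (logf_partial c y).
Definition Bc := 2 * M / `|x| ^+ k.+1.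

Lemma half_le1 : (2^-1 : R) <= 1.
Proof. by rewrite invf_le1 // ler1n. Qed.

Lemma PfA (A : {set 'I_k.+1}) r : max_is_k A -> 1 < r ->
  (forall j : 'I_k.+1, (0 < j)%N -> aa j r <= 2^-1) ->
  cvgn (Pf_partial f A r x) /\
  exists2 E, `|E| <= Bc * `|x| ^+ k.+1 * \prod_(j in A) hh j k.+1 r &
    Pf f A r x = expR (\sum_(1 <= i < k.+1) c i * x ^+ i * \prod_(j in A) hh j i r + E).
Proof.
move=> /andP[Amax A0] r1 aa2.
have r0 : 0 < r by apply: lt_trans r1.
have rn0 : r != 0 by rewrite gt_eqF.
set s := #|A|.
have s0 : (0 < s)%N by apply/card_gt0P; exists ord_max.
have jA : forall j : 'I_k.+1, j \in A -> (0 < j)%N.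
  move=> j jA; rewrite lt0n; apply/negP => /eqP j0; move: A0.
  have -> : ord0 = j by apply: val_inj; rewrite /= j0.
  by rewrite jA.
set al := \prod_(j in A) aa j r.
have al0 : 0 <= al by apply: prodr_ge0 => j _; exact: aa_ge0.
have al2 : al <= 2^-1.
  rewrite /al (bigD1 ord_max) //=.
  rewrite -[X in _ <= X]mulr1; apply: ler_pM.
  - exact: aa_ge0.
  - by apply: prodr_ge0 => *; exact: aa_ge0.
  - exact: (aa2 ord_max k0).
  - apply: prodr_ile1 => j /andP[jA' _]; rewrite aa_ge0 /=.
    exact: le_trans (aa2 _ (jA _ jA')) half_le1.
have lamb : forall n, 0 <= al / r ^+ n /\ al / r ^+ n <= 2^-1.
  move=> n; split; first by rewrite divr_ge0 // exprn_ge0 // ltW.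
  apply: le_trans al2; rewrite ler_pdivrMr ?exprn_gt0 //.
  by rewrite ler_peMr // exprn_ege1 // ltW.
have yn : forall n, x_n A r x n = (al / r ^+ n) * x.
  by move=> n; rewrite /x_n mulrAC.
have ybt : forall n, between0 x (x_n A r x n).
  move=> n; rewrite yn; case: (lamb n) => h1 h2; apply: between0_scale => //.
  exact: le_trans h2 half_le1.
have ynorm : forall n, `|x_n A r x n| <= `|x| / 2.
  move=> n; case: (lamb n) => h1 h2.
  by rewrite yn normrM (ger0_norm h1) mulrC ler_wpM2l.
set Rn := fun n => Lf (x_n A r x n) - \sum_(1 <= i < k.+1) c i * (x_n A r x n) ^+ i.
have Rb : forall n, `|Rn n| <= Bc * `|x_n A r x n| ^+ k.+1.
  by move=> n; apply: rem_bound => //; exact: (proj1 (f_ser _ (ybt n))).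
have eP : forall N, Pf_partial f A r x N =
    expR (\sum_(s <= n < N) ('C(n.-1, s.-1))%:R * Lf (x_n A r x n)).
  move=> N; rewrite /Pf_partial expR_sum; apply: eq_bigr => n _.
  by rewrite expRM_natl (proj2 (f_ser _ (ybt n))).
set tt := fun i : nat => (r ^+ i)^-1.
have ynX : forall i n, x_n A r x n ^+ i = (al * x) ^+ i * (tt i) ^+ n.
  by move=> i n; rewrite yn mulrAC powdiv.
have eS : forall N, \sum_(s <= n < N) ('C(n.-1, s.-1))%:R * Lf (x_n A r x n) =
   \sum_(1 <= i < k.+1) c i * (al * x) ^+ i * Qs (tt i) s N +
   \sum_(s <= n < N) ('C(n.-1, s.-1))%:R * Rn n.
  move=> N.
  have -> : \sum_(s <= n < N) ('C(n.-1, s.-1))%:R * Lf (x_n A r x n) =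
     \sum_(s <= n < N) (\sum_(1 <= i < k.+1) ('C(n.-1, s.-1))%:R * (c i * x_n A r x n ^+ i)
        + ('C(n.-1, s.-1))%:R * Rn n).
    by apply: eq_bigr => n _; rewrite -mulr_sumr -mulrDr /Rn addrC subrK.
  rewrite big_split /=; congr (_ + _).
  rewrite exchange_big /=; apply: eq_bigr => i _.
  rewrite /Qs mulr_sumr; apply: eq_bigr => n _; rewrite ynX; ring.
have t01 : forall i, (0 < i)%N -> 0 <= tt i /\ tt i < 1.
  move=> i i0; split; first by rewrite invr_ge0 exprn_ge0 // ltW.
  by rewrite invf_lt1 ?exprn_gt0 // exprn_egt1 // -lt0n.
set S1 := \sum_(1 <= i < k.+1) c i * (al * x) ^+ i * (tt i / (1 - tt i)) ^+ s.
have c1 : (fun N => \sum_(1 <= i < k.+1) c i * (al * x) ^+ i * Qs (tt i) s N) @ \oo --> S1.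
  apply: cvg_bigsum_in => i; rewrite mem_index_iota => /andP[i1 _].
  case: (t01 _ i1) => ta tb.
  by apply: cvgM; [exact: cvg_cst | exact: Qs_cvg].
set K := Bc * (al * `|x|) ^+ k.+1.
have Kb : forall n, `|('C(n.-1, s.-1))%:R * Rn n| <= K * (('C(n.-1, s.-1))%:R * tt k.+1 ^+ n).
  move=> n; rewrite normrM ger0_norm ?ler0n // mulrCA; apply: ler_wpM2l; first exact: ler0n.
  have e : `|x_n A r x n| ^+ k.+1 = (al * `|x|) ^+ k.+1 * tt k.+1 ^+ n.
    case: (lamb n) => h1 _.
    by rewrite yn normrM (ger0_norm h1) mulrAC powdiv.
  apply: le_trans (Rb n) _; rewrite e le_eqVlt; apply/orP; left; apply/eqP.
  rewrite /K /Bc; ring.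
have cG : cvgn (fun N => \sum_(s <= n < N) K * (('C(n.-1, s.-1))%:R * tt k.+1 ^+ n)).
  apply/cvg_ex; exists (K * (tt k.+1 / (1 - tt k.+1)) ^+ s).
  under eq_fun do rewrite -mulr_sumr.
  case: (t01 k.+1 isT) => ta tb.
  by apply: cvgM; [exact: cvg_cst | exact: Qs_cvg].
have [c2 E2] := @sum_dom_cvg R _ _ s Kb cG.
set E := limn (fun N => \sum_(s <= n < N) ('C(n.-1, s.-1))%:R * Rn n).
have cS : (fun N => \sum_(s <= n < N) ('C(n.-1, s.-1))%:R * Lf (x_n A r x n)) @ \oo --> S1 + E.
  under eq_fun do rewrite eS.
  exact: cvgD c1 c2.
have cP : Pf_partial f A r x @ \oo --> expR (S1 + E).
  have -> : Pf_partial f A r x =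
      (fun N => expR (\sum_(s <= n < N) ('C(n.-1, s.-1))%:R * Lf (x_n A r x n))).
    by apply/funext => N; exact: eP.
  exact: cvg_comp _ _ cS (@continuous_expR R (S1 + E)).
split; first by apply/cvg_ex; exists (expR (S1 + E)).
exists E.
  apply: le_trans E2 _.
  have -> : limn (fun N => \sum_(s <= n < N) K * (('C(n.-1, s.-1))%:R * tt k.+1 ^+ n))
      = K * (tt k.+1 / (1 - tt k.+1)) ^+ s.
    apply: cvg_lim => //; under eq_fun do rewrite -mulr_sumr.
    case: (t01 k.+1 isT) => ta tb.
    by apply: cvgM; [exact: cvg_cst | exact: Qs_cvg].
  rewrite -(@hh_prod R k A k.+1 r isT r1) /K /tt /s exprMn le_eqVlt; apply/orP; left; apply/eqP.
  ring.
rewrite /Pf (cvg_lim _ cP) //; congr (expR (_ + _)).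
rewrite /S1; apply: eq_big_nat => i /andP[i1 _].
rewrite -(@hh_prod R k A i r i1 r1) /tt /s exprMn; ring.
Qed.
End Main.

Section Final.
Variable R : realType.
Variable k : nat.
Hypothesis k0 : (0 < k)%N.

Definition zF (h : nat -> R) (j : 'I_k.+1) : R :=
  if j == ord0 then 0 else if j == ord_max then h j else - h j.
Definition wG (j : 'I_k.+1) : R := if j == ord_max then 0 else 1.

Lemma ord0_max : (ord0 : 'I_k.+1) != ord_max.
Proof. by apply/eqP => /(congr1 val) /= e; move: k0; rewrite -e. Qed.

Lemma term_nmax (h : nat -> R) (J : {set 'I_k.+1}) : ~~ max_is_k J ->
  \prod_(j : 'I_k.+1) (if j \in J then zF h j else wG j) = 0.
Proof.
rewrite /max_is_k negb_and negbK => /orP[Jm|J0].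
  by rewrite (bigD1 ord_max) //= (negPf Jm) /wG eqxx mul0r.
by rewrite (bigD1 ord0) //= J0 /zF eqxx mul0r.
Qed.

Lemma term_max (h : nat -> R) (J : {set 'I_k.+1}) : max_is_k J ->
  \prod_(j : 'I_k.+1) (if j \in J then zF h j else wG j) =
  (-1) ^+ (#|J|.-1) * \prod_(j in J) h j.
Proof.
move=> /andP[Jm J0].
rewrite (bigID (fun j => j \in J)) /=.
rewrite [X in _ * X = _]big1 ?mulr1; last first.
  move=> j jJ; rewrite (negPf jJ) /wG; case: eqP => // jm.
  by move: jJ; rewrite jm Jm.
rewrite [LHS](eq_bigr (fun j => zF h j)); last by move=> j ->.
rewrite (big_setD1 ord_max Jm) [X in _ = _ * X](big_setD1 ord_max Jm) /=.
have -> : zF h ord_max = h k by rewrite /zF eq_sym (negPf ord0_max) eqxx.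
have -> : \prod_(j in J :\ ord_max) zF h j = \prod_(j in J :\ ord_max) - h j.
  apply: eq_bigr => j; rewrite in_setD1 => /andP[jm jJ].
  rewrite /zF (negPf jm); case: eqP => // j0; by move: J0; rewrite -j0 jJ.
rewrite prodrN (cardsD1 ord_max J) Jm /=; ring.
Qed.
Lemma sign_sum (h : nat -> R) :
  \sum_(A : {set 'I_k.+1} | max_is_k A) (-1) ^+ (#|A|.-1) * \prod_(j in A) h j
  = \prod_(j : 'I_k.+1) (zF h j + wG j).
Proof.
rewrite bigA_distr [RHS](bigID (@max_is_k k)) /= [X in _ = _ + X]big1 ?addr0; last first.
  by move=> J; exact: term_nmax.
apply: eq_bigr => J mJ.
by rewrite term_max.
Qed.
Lemma prod_lim_k :
  (fun r => \prod_(j : 'I_k.+1) (zF (fun j => hh j k r) j + wG j)) @ (1 : R)^'+ --> (1 : R).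
Proof.
have e1 : \prod_(j : 'I_k.+1) (1:R) = 1 by rewrite big1_eq.
rewrite -[X in _ --> X]e1.
apply: cvg_bigprod => j _.
have [->|j0] := eqVneq j ord0.
  rewrite /zF /wG eqxx (negPf ord0_max) add0r; exact: cvg_cst.
have [->|jm] := eqVneq j ord_max.
  have h : (fun r : R => (1 : R)) @ (1 : R)^'+ --> (1 : R) by exact: cvg_cst.
  apply: cvg_trans h; apply: near_eq_cvg.
  near=> r; have r1 : 1 < r by near: r; exact: nbhs_right_gt.
  by rewrite /zF /wG eqxx eq_sym (negPf ord0_max) addr0 /= hh_eq1.
rewrite /zF /wG (negPf j0) (negPf jm).
have jk : (0 < j < k)%N.
  apply/andP; split.
    by rewrite lt0n; apply: contra j0 => /eqP e; apply/eqP/val_inj.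
  have := ltn_ord j; rewrite ltnS leq_eqVlt => /orP[/eqP e|//].
  have ej : j = ord_max by apply: val_inj; rewrite /= e.
  by rewrite ej eqxx in jm.
case/andP: jk => ja jb.
have h2 : (fun r => - hh j k r + 1) @ (1 : R)^'+ --> - 0 + (1 : R).
  by apply: cvgD; [apply: cvgN; exact: hh_cvg0 | exact: cvg_cst].
by rewrite oppr0 add0r in h2.
Unshelve. all: by end_near.
Qed.
Lemma prod_zero_lt i r : (0 < i)%N -> (i < k)%N -> 1 < r ->
  \prod_(j : 'I_k.+1) (zF (fun j => hh j i r) j + wG j) = 0.
Proof.
move=> i0 ik r1.
have ik1 : (i < k.+1)%N by apply: ltnW.
rewrite (bigD1 (inord i)) //= /zF /wG.
have -> : (inord i == ord0 :> 'I_k.+1) = false.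
  by apply/negbTE; apply/negP => /eqP/(congr1 val) /=; rewrite inordK //; move=> e; move: i0; rewrite e.
have -> : (inord i == ord_max :> 'I_k.+1) = false.
  by apply/negbTE; apply/negP => /eqP/(congr1 val) /=; rewrite inordK //; move=> e; move: ik; rewrite e ltnn.
by rewrite inordK // hh_eq1 // addrC subrr mul0r.
Qed.

Lemma main_lim (c : nat -> R) (x : R) :
  (fun r => \sum_(1 <= i < k.+1) c i * x ^+ i *
      \prod_(j : 'I_k.+1) (zF (fun j => hh j i r) j + wG j)) @ (1 : R)^'+ --> c k * x ^+ k.
Proof.
have -> : c k * x ^+ k = \sum_(1 <= i < k.+1) (if i == k then c i * x ^+ i * 1 else 0).
  rewrite big_nat_recr //= eqxx mulr1 big_nat_cond big1 ?add0r // => i /andP[/andP[_ ik] _].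
  by rewrite ltn_eqF.
apply: cvg_bigsum_in => i; rewrite mem_index_iota => /andP[i1 ik].
case: eqP => [->|ne].
  by apply: cvgM; [exact: cvg_cst | exact: prod_lim_k].
have ik' : (i < k)%N by rewrite ltn_neqAle; apply/andP; split; [apply/eqP|].
have h : (fun r : R => (0 : R)) @ (1 : R)^'+ --> (0 : R) by exact: cvg_cst.
apply: cvg_trans h; apply: near_eq_cvg.
near=> r; have r1 : 1 < r by near: r; exact: nbhs_right_gt.
by rewrite prod_zero_lt // mulr0.
Unshelve. all: by end_near.
Qed.

Lemma err_lim (A : {set 'I_k.+1}) (C : R) : max_is_k A ->
  (fun r => C * \prod_(j in A) hh j k.+1 r) @ (1 : R)^'+ --> (0 : R).
Proof.
move=> /andP[Am A0].
have e : \prod_(j in A) (0 : R) = 0 by rewrite (bigD1 ord_max) //= mul0r.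
have hp : (fun r => \prod_(j in A) hh j k.+1 r) @ (1 : R)^'+ --> \prod_(j in A) (0 : R).
  apply: cvg_bigprod => j jA; apply: hh_cvg0; last exact: ltn_ord.
  rewrite lt0n; apply/negP => /eqP j0; move: A0.
  have -> : ord0 = j by apply: val_inj; rewrite /= j0.
  by rewrite jA.
rewrite e in hp; have := cvgM (cvg_cst C) hp; rewrite mulr0; exact.
Qed.
Lemma good_near : \forall r \near (1 : R)^'+,
  1 < r /\ forall j : 'I_k.+1, (0 < j)%N -> aa j r <= 2^-1.
Proof.
have c : (fun r : R => r ^+ k - 1) @ (1 : R)^'+ --> 0.
  apply: cvg_at_right_filter.
  rewrite -[X in _ --> X](subrr (1 : R)) -[X in _ --> X - _](expr1n R k).
  apply: cvgB; [exact: exprn_continuous | exact: cvg_cst].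
have h0 : (0 : R) <= 2^-1 by rewrite invr_ge0.
have h1 : (2^-1 : R) <= 1 := half_le1 R.
have ek : (0 : R) < (2^-1) ^+ k by rewrite exprn_gt0 // invr_gt0.
near=> r.
have r1 : 1 < r by near: r; exact: nbhs_right_gt.
have lt : r ^+ k - 1 < (2^-1) ^+ k by near: r; exact: cvgr_lt c _ ek.
split => // j j0.
have jk : (j <= k)%N by rewrite -ltnS ltn_ord.
rewrite -(ler_pXn2r j0) ?nnegrE ?aa_ge0 // aaX ?ltW //.
apply: lt_le_trans _ (ler_wiXn2l h0 h1 jk); apply: le_lt_trans _ lt.
by rewrite lerD2r ler_weXn2l // ltW.
Unshelve. all: by end_near.
Qed.

Lemma sgnA (A : {set 'I_k.+1}) : max_is_k A ->
  (-1) ^+ (#|A|.-1) = (if odd #|A| then 1 else -1 : R).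
Proof.
move=> /andP[Am _].
have : (0 < #|A|)%N by apply/card_gt0P; exists ord_max.
case: #|A| => // n _ /=.
by rewrite -signr_odd; case: (odd n).
Qed.
End Final.
Arguments zF {R k}.
Arguments wG {R k}.

Theorem lemma5 (R : realType) (f : R -> R) (c : nat -> R) (x : R)
  (f_an : forall y, between0 x y -> analytic_at f y)
  (f_nz : forall y, between0 x y -> f y != 0)
  (f0 : f 0 = 1)
  (f_ser : forall y, between0 x y ->
     cvgn (logf_partial c y) /\ f y = expR (limn (logf_partial c y)))
  (k : nat) (k_gt0 : (0 < k)%N) :
  (\forall r \near (1 : R)^'+, forall A : {set 'I_k.+1}, max_is_k A -> cvgn (Pf_partial f A r x)) /\
  (fun r : R => Pf_ratio f k r x) @ (1 : R)^'+ --> f_component c k x.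
Proof.
have xb : between0 x x.
  by rewrite /between0 /= ge_min le_max !lexx !orbT.
have [M M0 cM] := @coef_bound R c x (proj1 (f_ser x xb)).
have PA := @PfA R f c x k f_ser M M0 cM k_gt0.
have G := @good_near R k.
split.
  near=> r => A mA.
  have [r1 a2] : 1 < r /\ forall j : 'I_k.+1, (0 < j)%N -> aa j r <= 2^-1 by near: r.
  exact: (proj1 (PA A r mA r1 a2)).
pose L (A : {set 'I_k.+1}) (r : R) := ln (Pf f A r x).
pose T (A : {set 'I_k.+1}) (r : R) := \sum_(1 <= i < k.+1) c i * x ^+ i * \prod_(j in A) hh j i r.
pose sg (A : {set 'I_k.+1}) : R := (-1) ^+ (#|A|.-1).
pose g (r : R) := \sum_(A : {set 'I_k.+1} | max_is_k A) sg A * L A r.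
pose main (r : R) := \sum_(1 <= i < k.+1) c i * x ^+ i *
      \prod_(j : 'I_k.+1) (zF (fun j => hh j i r) j + wG j).
pose err (r : R) := \sum_(A : {set 'I_k.+1} | max_is_k A) sg A * (L A r - T A r).
have eg : forall r, g r = main r + err r.
  move=> r.
  have em : main r = \sum_(A : {set 'I_k.+1} | max_is_k A) sg A * T A r.
    rewrite /T; under [RHS]eq_bigr do rewrite mulr_sumr.
    rewrite [RHS]exchange_big /=; apply: eq_bigr => i _.
    rewrite -(@sign_sum R k k_gt0) mulr_sumr; apply: eq_bigr => A _; rewrite /sg; ring.
  rewrite em -big_split /=; apply: eq_bigr => A _; ring.
have cerr : err @ (1 : R)^'+ --> (0 : R).
  have e0 : \sum_(A : {set 'I_k.+1} | max_is_k A) (0 : R) = 0 by rewrite big1_eq.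
  suff h : err @ (1 : R)^'+ --> \sum_(A : {set 'I_k.+1} | max_is_k A) (0 : R).
    by rewrite e0 in h.
  apply: cvg_bigsum => A mA.
  pose C := @Bc R x k M * `|x| ^+ k.+1.
  pose U r := C * \prod_(j in A) hh j k.+1 r.
  have d : (fun r => L A r - T A r) @ (1 : R)^'+ --> (0 : R).
    apply: (@squeeze_cvgr _ _ _ _ (fun r => - U r) U).
    - near=> r.
      have [r1 a2] : 1 < r /\ forall j : 'I_k.+1, (0 < j)%N -> aa j r <= 2^-1 by near: r.
      have [_ [E hE eP]] := PA A r mA r1 a2.
      have -> : L A r - T A r = E by rewrite /L eP expRK /T addrC addKr.
      by rewrite -ler_norml.
    - have h1 := @err_lim R k A (- C) mA.
      rewrite (_ : (fun r => - C * \prod_(j in A) hh j k.+1 r) = (fun r => - U r)) in h1.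
        exact: h1.
      by apply/funext => r; rewrite mulNr.
    - exact: err_lim.
  have := cvgM (cvg_cst (sg A)) d; rewrite mulr0; exact.
have gl : g @ (1 : R)^'+ --> c k * x ^+ k.
  have -> : g = (fun r => main r + err r) by apply/funext => r; exact: eg.
  rewrite -[X in _ --> X]addr0; apply: cvgD; last exact: cerr.
  exact: main_lim.
have hP : {near (1 : R)^'+, (fun r => expR (g r)) =1 (fun r => Pf_ratio f k r x)}.
  near=> r.
  have [r1 a2] : 1 < r /\ forall j : 'I_k.+1, (0 < j)%N -> aa j r <= 2^-1 by near: r.
  have ePf : forall A, max_is_k A -> Pf f A r x = expR (L A r).
    by move=> A mA; have [_ [E _ eP]] := PA A r mA r1 a2; rewrite /L eP expRK.
  have eodd : \prod_(A : {set 'I_k.+1} | max_is_k A && odd #|A|) Pf f A r x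
      = expR (\sum_(A : {set 'I_k.+1} | max_is_k A && odd #|A|) L A r).
    by rewrite expR_sum; apply: eq_bigr => A /andP[mA _]; exact: ePf.
  have eeven : \prod_(A : {set 'I_k.+1} | max_is_k A && ~~ odd #|A|) Pf f A r x
      = expR (\sum_(A : {set 'I_k.+1} | max_is_k A && ~~ odd #|A|) L A r).
    by rewrite expR_sum; apply: eq_bigr => A /andP[mA _]; exact: ePf.
  rewrite /= /Pf_ratio eodd eeven -expRB; congr expR.
  rewrite /g (bigID (fun A : {set 'I_k.+1} => odd #|A|)) /= -sumrN.
  congr (_ + _); apply: eq_bigr => A /andP[mA oA]; rewrite /sg sgnA //.
    by rewrite oA mul1r.
  by rewrite (negPf oA) mulN1r.
apply: cvg_trans (near_eq_cvg hP) _.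
rewrite /f_component.
exact: cvg_comp _ _ gl (@continuous_expR R _).
Unshelve. all: by end_near.
Qed.
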